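(* Assume the problem is a quadratic program: there are constant matrices $H\in\mathbb{R}^{n\times n}$, $A_{\mathcal I}\in\mathbb{R}^{m_{\mathcal I}\times n}$, $A_{\mathcal E}\in\mathbb{R}^{m_{\mathcal E}\times n}$ with $H(x,\lambda)\equiv H$, $A_{\mathcal I}(x)\equiv A_{\mathcal I}$, $A_{\mathcal E}(x)\equiv A_{\mathcal E}$. In the setting of the context (with the sequences $\{\mu_k\}$, $\{w_k\}$, subsequence $\mathcal K$), for all $k\in\mathcal K$ sufficiently large and all $q\ge1$, $$J_F(w_{k+1})\,\hat w^{w^*,q+1}_{k+1}=-\sum_{i=1}^q\binom{q+1}{i}\begin{pmatrix}0\\ \bigl[\hat\Lambda^{w^*,q+1-i}_{k+1}\bigr]_{\mathcal I}A_{\mathcal I}\hat x^{w^*,i}_{k+1}\\ 0\end{pmatrix}.$$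
   Context: Problem: minimize $f(x)$ subject to $c_{\mathcal I}(x)\ge0$, $c_{\mathcal E}(x)=0$, $f,c_i\colon\mathbb{R}^n\to\mathbb{R}$, $c=(c_{\mathcal I}^T,c_{\mathcal E}^T)^T\in\mathbb{R}^m$, $m=m_{\mathcal I}+m_{\mathcal E}$. Notation: $g=\nabla f$, $A$ the Jacobian of $c$, $H(x,\lambda)$ the Hessian in $x$ of $f(x)-\lambda^Tc(x)$, $[\cdot]_S$ rows indexed by $S$, uppercase = diagonal matrix of the lowercase vector (so $\hat\Lambda=\mathrm{diag}(\hat\lambda)$), $e$ the all-ones vector, $w=(x,\lambda)$ with superscripts/subscripts applying to both parts. $F^\mu(x,\lambda)=\bigl(g(x)-A(x)^T\lambda;\ C_{\mathcal I}(x)[\lambda]_{\mathcal I}-\mu e;\ c_{\mathcal E}(x)\bigr)$ with Jacobian $J_F$ in $w$. Let $x^*$ be a KKT point at which LICQ, strict complementarity (multiplier $\lambda^*$ with $[\lambda^*]_i>0$ for active inequality indices) and strong second-order sufficiency ($p^TH(x^*,\lambda^* )p\ge\omega\|p\|^2$, $\omega>0$, for all $p$ orthogonal to all active constraint gradients) hold; $w^*=(x^*,\lambda^* )$. Let $w^{w^*,0}$ be the locally unique smooth function near $0$ with $F^0(w^{w^*,0}(r))=r$, $w^{w^*,0}(0)=w^*$; with $\mathrm{nml}(r)=r/\|r\|$ ($r\ne0$), $\mathrm{nml}(0)=0$, let $w^{w^*,\mu,r}(\rho)=w^{w^*,0}(\rho\,\mathrm{nml}(r)+(0,\mu e^T,0)^T)$.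 Let $\{\mu_k\}$ be strictly decreasing positive, $\{w_k\}$ with $\|F^{\mu_k}(w_{k+1})\|\le\epsilon(\mu_k)$, $\epsilon(\mu)=\Theta(\mu)$ positive, and $w_{k+1}\to w^*$ along a subsequence $\mathcal K$. Set $r_{k+1}=F^{\mu_{k+1}}(w_{k+1})$ and for $q\ge1$ $$\hat w^{w^*,q}_{k+1}=\frac{d^q w^{w^*,\mu_{k+1},r_{k+1}}(\rho)}{d\rho^q}\Big|_{\rho=\|r_{k+1}\|}\cdot(-\|r_{k+1}\|)^q.$$ *)

(* Defs.v *)
From HB Require Import structures.
From mathcomp Require Import all_boot all_order all_algebra.
From mathcomp Require Import all_classical all_reals all_analysis.
Set Implicit Arguments. Unset Strict Implicit. Unset Printing Implicit Defensive.
Import Order.TTheory GRing.Theory Num.Theory.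
Import numFieldNormedType.Exports.
Local Open Scope ring_scope.
Local Open Scope classical_set_scope.

Section Defs.
Variable R : realType.

Definition enorm (k : nat) (v : 'cV[R]_k) : R := Num.sqrt (\sum_i v i 0 ^+ 2).

Definition nml (k : nat) (r : 'cV[R]_k) : 'cV[R]_k :=
  if r == 0 then 0 else (enorm r)^-1 *: r.

(* Componentwise product of two vectors:  diag(u) v. *)
Definition cwmul (k : nat) (u v : 'cV[R]_k) : 'cV[R]_k := \col_i (u i 0 * v i 0).

Variables (n mI mE : nat).
(* Quadratic program data: f(x) = 1/2 x^T H x + d^T x (H symmetric),
   c_I(x) = A_I x - b_I, c_E(x) = A_E x - b_E. *)
Variables (H : 'M[R]_n) (d : 'cV[R]_n)
          (AI : 'M[R]_(mI, n)) (bI : 'cV[R]_mI)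
          (AE : 'M[R]_(mE, n)) (bE : 'cV[R]_mE).

Definition qp_g (x : 'cV[R]_n) : 'cV[R]_n := H *m x + d.
Definition qp_cI (x : 'cV[R]_n) : 'cV[R]_mI := AI *m x - bI.
Definition qp_cE (x : 'cV[R]_n) : 'cV[R]_mE := AE *m x - bE.
Definition qp_A : 'M[R]_(mI + mE, n) := col_mx AI AE.

Definition wx (w : 'cV[R]_(n + (mI + mE))) : 'cV[R]_n := usubmx w.
Definition wl (w : 'cV[R]_(n + (mI + mE))) : 'cV[R]_(mI + mE) := dsubmx w.
Definition wlI (w : 'cV[R]_(n + (mI + mE))) : 'cV[R]_mI := usubmx (wl w).

Definition Fmu (mu : R) (w : 'cV[R]_(n + (mI + mE))) : 'cV[R]_(n + (mI + mE)) :=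
  col_mx (qp_g (wx w) - qp_A^T *m wl w)
         (col_mx (cwmul (qp_cI (wx w)) (wlI w) - mu *: const_mx 1)
                 (qp_cE (wx w))).

Definition shift (mu : R) : 'cV[R]_(n + (mI + mE)) :=
  col_mx 0 (col_mx (mu *: const_mx 1) 0).

End Defs.

Definition jacF (R : realType) (M N : nat) (F : 'cV[R]_N -> 'cV[R]_M)
  (w : 'cV[R]_N) : 'M[R]_(M, N) :=
  \matrix_(i, j) (derive F w (delta_mx j 0 : 'cV[R]_N)) i 0.

Fixpoint iterD (R : realType) (N M : nat) (vs : seq 'cV[R]_N)
  (f : 'cV[R]_N -> 'cV[R]_M) : 'cV[R]_N -> 'cV[R]_M :=
  match vs with
  | [::] => f
  | v :: vs' => fun x => derive (iterD vs' f) x v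
  end.

Definition smooth_on (R : realType) (N M : nat) (U : set 'cV[R]_N)
  (f : 'cV[R]_N -> 'cV[R]_M) : Prop :=
  forall vs : seq 'cV[R]_N,
    (forall x v, U x -> derivable (iterD vs f) x v) /\
    {within U, continuous (iterD vs f)}.

Definition wpath (R : realType) (n mI mE : nat)
  (W : 'cV[R]_(n + (mI + mE)) -> 'cV[R]_(n + (mI + mE)))
  (mu : R) (r : 'cV[R]_(n + (mI + mE))) (rho : R) : 'cV[R]_(n + (mI + mE)) :=
  W (rho *: nml r + shift n mI mE mu).

Definition what (R : realType) (n mI mE : nat)
  (W : 'cV[R]_(n + (mI + mE)) -> 'cV[R]_(n + (mI + mE)))
  (mu : R) (r : 'cV[R]_(n + (mI + mE))) (q : nat) : 'cV[R]_(n + (mI + mE)) :=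
  (- enorm r) ^+ q *: derive1n q (wpath W mu r) (enorm r).

(* Main.v *)
Require Import Defs.
From HB Require Import structures.
From mathcomp Require Import all_boot all_order all_algebra.
From mathcomp Require Import all_classical all_reals all_analysis.
From mathcomp Require Import ring lra.
Import Order.TTheory GRing.Theory Num.Theory.
Import numFieldNormedType.Exports.
Local Open Scope ring_scope.
Local Open Scope classical_set_scope.

Section Ent.
Context {R : realType}.

Lemma is_derive_entry {p q : nat} {f : R -> 'M[R]_(p,q)} {x : R} {df : 'M[R]_(p,q)} :
  is_derive x 1 f df -> forall i j, is_derive x 1 (fun t => f t i j) (df i j).
Proof.
move=> [fd fv] i j.
have := (derivable_mxP f x 1).1 fd i j => dij.
apply: DeriveDef => //.
by rewrite -fv derive_mx // mxE.
Qed.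

Lemma is_derive_mx {p q : nat} (f : R -> 'M[R]_(p,q)) (x : R) (df : 'M[R]_(p,q)) :
  (forall i j, is_derive x 1 (fun t => f t i j) (df i j)) -> is_derive x 1 f df.
Proof.
move=> H.
have fd : derivable f x 1 by apply/derivable_mxP => i j; case: (H i j).
apply: DeriveDef => //.
rewrite derive_mx //; apply/matrixP => i j; rewrite mxE.
by case: (H i j).
Qed.

Lemma is_derive_mulmx {p q r : nat} (M : 'M[R]_(r,p)) {f : R -> 'M[R]_(p,q)} {x : R} {df : 'M[R]_(p,q)} :
  is_derive x 1 f df -> is_derive x 1 (fun t => M *m f t) (M *m df).
Proof.
move=> fd; apply: is_derive_mx => i j.
have -> : (fun t => (M *m f t) i j) = \sum_(l < p) (fun t => M i l * f t l j).
  by rewrite fct_sumE; apply/funext => t; rewrite mxE.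
rewrite mxE.
apply: (@is_derive_sum _ _ _ _ (fun l t => M i l * f t l j) x 1 (fun l => M i l * df l j)) => l.
have := is_deriveZ (M i l) (is_derive_entry fd l j).
by [].
Qed.

End Ent.

Section Norms.
Context {R : realType}.

Lemma mx_entry_le {p q} (M : 'M[R]_(p,q)) i j : `|M i j| <= `|M|.
Proof.
rewrite [leRHS]/Num.Def.normr /= mx_normrE.
exact: (le_bigmax _ _ (i, j)).
Qed.

Lemma mx_norm_le {p q} (M : 'M[R]_(p,q)) c :
  0 <= c -> (forall i j, `|M i j| <= c) -> `|M| <= c.
Proof.
move=> c0 h; rewrite [leLHS]/Num.Def.normr /= mx_normrE.
by apply: bigmax_le => // -[i j] _; exact: h.
Qed.

Lemma norm_mulmx {p q r} (A : 'M[R]_(p,q)) (B : 'M[R]_(q,r)) :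
  `|A *m B| <= q%:R * `|A| * `|B|.
Proof.
apply: mx_norm_le; first by rewrite !mulr_ge0.
move=> i j; rewrite mxE.
apply: le_trans (ler_norm_sum _ _ _) _.
apply: le_trans (_ : \sum_(l < q) `|A| * `|B| <= _).
  apply: ler_sum => l _; rewrite normrM.
  by apply: ler_pM => //; exact: mx_entry_le.
by rewrite sumr_const card_ord mulr_natl mulrnAl.
Qed.

Lemma norm_cwmul {k} (a b : 'cV[R]_k) : `|cwmul a b| <= `|a| * `|b|.
Proof.
apply: mx_norm_le; first by rewrite mulr_ge0.
move=> i j; rewrite mxE normrM.
by apply: ler_pM => //; exact: mx_entry_le.
Qed.

End Norms.

Section CW.
Context {R : realType} {k : nat}.
Implicit Types a b c : 'cV[R]_k.
Lemma cwmulC a b : cwmul a b = cwmul b a.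
Proof. by apply/matrixP => i j; rewrite !mxE mulrC. Qed.
Lemma cwmulDl a b c : cwmul (a + b) c = cwmul a c + cwmul b c.
Proof. by apply/matrixP => i j; rewrite !mxE mulrDl. Qed.
Lemma cwmulDr a b c : cwmul c (a + b) = cwmul c a + cwmul c b.
Proof. by apply/matrixP => i j; rewrite !mxE mulrDr. Qed.
Lemma cwmulZl x a b : cwmul (x *: a) b = x *: cwmul a b.
Proof. by apply/matrixP => i j; rewrite !mxE mulrA. Qed.
Lemma cwmulZr x a b : cwmul a (x *: b) = x *: cwmul a b.
Proof. by apply/matrixP => i j; rewrite !mxE mulrCA. Qed.
Lemma cwmulNl a b : cwmul (- a) b = - cwmul a b.
Proof. by apply/matrixP => i j; rewrite !mxE mulNr. Qed.
Lemma cwmulNr a b : cwmul a (- b) = - cwmul a b.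
Proof. by apply/matrixP => i j; rewrite !mxE mulrN. Qed.
Lemma cwmul0l a : cwmul 0 a = 0.
Proof. by apply/matrixP => i j; rewrite !mxE mul0r. Qed.
Lemma cwmul0r a : cwmul a 0 = 0.
Proof. by apply/matrixP => i j; rewrite !mxE mulr0. Qed.
Lemma cwmul_diag a b : cwmul a b = diag_mx a^T *m b.
Proof. by apply/matrixP => i j; rewrite mul_diag_mx !mxE (ord1 j). Qed.
Lemma is_derive_cwmul {f g : R -> 'cV[R]_k} {x : R} {df dg : 'cV[R]_k} :
  is_derive x 1 f df -> is_derive x 1 g dg ->
  is_derive x 1 (fun t => cwmul (f t) (g t)) (cwmul df (g x) + cwmul (f x) dg).
Proof.
move=> fd gd; apply: is_derive_mx => i j.
have -> : (fun t => cwmul (f t) (g t) i j) = (fun t => f t i 0) * (fun t => g t i 0).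
  by apply/funext => t; rewrite !mxE.
apply: is_derive_eq.
  exact: (is_deriveM (is_derive_entry fd i 0) (is_derive_entry gd i 0)).
rewrite !mxE addrC.
by rewrite [df i 0 * _]mulrC.
Qed.
End CW.

Lemma acfix (V : zmodType) (a b c d e f g : V) :
  a + (b + c) + (d + e + (f + g)) = a + b + d + (c + e + f) + g.
Proof.
rewrite !addrA; congr (_ + _).
rewrite -!addrA; congr (_ + _); congr (_ + _).
by rewrite addrCA.
Qed.

Lemma acfix2 (V : zmodType) (a b c d f g : V) :
  a + b + c + (d + f + g) = a + (b + d) + (c + f) + g.
Proof.
rewrite !addrA; congr (_ + _).
rewrite -[a + b + c + d]addrA [c + d]addrC addrA.
by rewrite -[a + b + d]addrA.
Qed.

Section Quad.
Context {R : realType} {N k : nat} (c0 : 'cV[R]_N) (L : 'M[R]_N)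
  (E : 'M[R]_(N,k)) (S T : 'M[R]_(k,N)).

Definition Qf (v v' : 'cV[R]_N) : 'cV[R]_N := E *m cwmul (S *m v) (T *m v').
Definition Fq w := c0 + L *m w + Qf w w.
Definition dFq w v := L *m v + Qf w v + Qf v w.
Definition Jm w := L + E *m diag_mx (S *m w)^T *m T + E *m diag_mx (T *m w)^T *m S.

Lemma QfDl a b c : Qf (a + b) c = Qf a c + Qf b c.
Proof. by rewrite /Qf mulmxDr cwmulDl mulmxDr. Qed.
Lemma QfDr a b c : Qf c (a + b) = Qf c a + Qf c b.
Proof. by rewrite /Qf mulmxDr cwmulDr mulmxDr. Qed.
Lemma QfZl x a b : Qf (x *: a) b = x *: Qf a b.
Proof. by rewrite /Qf -scalemxAr cwmulZl scalemxAr. Qed.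
Lemma QfZr x a b : Qf a (x *: b) = x *: Qf a b.
Proof. by rewrite /Qf -scalemxAr cwmulZr scalemxAr. Qed.
Lemma QfNl a b : Qf (- a) b = - Qf a b.
Proof. by rewrite -scaleN1r QfZl scaleN1r. Qed.
Lemma QfNr a b : Qf a (- b) = - Qf a b.
Proof. by rewrite -scaleN1r QfZr scaleN1r. Qed.
Lemma QfBl a b c : Qf (a - b) c = Qf a c - Qf b c.
Proof. by rewrite QfDl QfNl. Qed.
Lemma QfBr a b c : Qf c (a - b) = Qf c a - Qf c b.
Proof. by rewrite QfDr QfNr. Qed.

Lemma dFqE w v : dFq w v = Jm w *m v.
Proof.
rewrite /dFq /Jm /Qf [cwmul (S *m v) _]cwmulC !cwmul_diag !mulmxDl -!mulmxA.
by [].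
Qed.

Lemma Fq_shift w v h : Fq (w + h *: v) = Fq w + h *: dFq w v + (h ^+ 2) *: Qf v v.
Proof.
rewrite /Fq /dFq !QfDl !QfDr !QfZl !QfZr mulmxDr -scalemxAr !scalerDr scalerA -expr2.
exact: acfix.
Qed.

Lemma is_derive_Fq w v : is_derive w v Fq (dFq w v).
Proof.
have gl : (fun h : R => dFq w v + h *: Qf v v) @ 0^' --> dFq w v.
  rewrite -[X in _ --> X]addr0; apply: cvgD; first exact: cvg_cst.
  rewrite -(scale0r (Qf v v)); apply: cvgZr_tmp.
  exact: nbhs_dnbhs.
have ql : (fun h : R => h^-1 *: ((Fq \o shift w) (h *: v) - Fq w)) @ 0^' --> dFq w v.
  apply: cvg_trans gl; apply: near_eq_cvg; near=> h.
  have hn0 : h != 0 by near: h; exact: nbhs_dnbhs_neq.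
  rewrite /= [h *: v + w]addrC Fq_shift.
  have -> : forall a b c : 'cV[R]_N, a + b + c - a = b + c.
    by move=> a b c; rewrite addrAC [a + b]addrC addrK.
  rewrite scalerDr !scalerA.
  by rewrite mulVf // scale1r expr2 mulrA mulVf // mul1r.
apply: DeriveDef; first by apply/cvg_ex; exists (dFq w v).
exact: cvg_lim ql.
Unshelve. all: by end_near. Qed.

Lemma jacF_Fq w : jacF Fq w = Jm w.
Proof.
apply/matrixP => i j; rewrite mxE.
rewrite (@derive_val _ _ _ _ _ _ _ (is_derive_Fq w (delta_mx j 0))).
by rewrite dFqE -colE mxE.
Qed.

Lemma is_derive_Qf {f g : R -> 'cV[R]_N} {x : R} {df dg : 'cV[R]_N} :
  is_derive x 1 f df -> is_derive x 1 g dg ->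
  is_derive x 1 (fun t => Qf (f t) (g t)) (Qf df (g x) + Qf (f x) dg).
Proof.
move=> fd gd.
apply: is_derive_eq.
  exact: (is_derive_mulmx E (is_derive_cwmul (is_derive_mulmx S fd) (is_derive_mulmx T gd))).
by rewrite mulmxDr.
Qed.

Definition K0 := (k%:R * `|E|) * (N%:R * `|S|) * (N%:R * `|T|).

Lemma K0_ge0 : 0 <= K0.
Proof. by rewrite /K0 !mulr_ge0. Qed.

Lemma norm_Qf v v' : `|Qf v v'| <= K0 * `|v| * `|v'|.
Proof.
have h1 := norm_mulmx E (cwmul (S *m v) (T *m v')).
have h2 := norm_cwmul (S *m v) (T *m v').
have h3 := norm_mulmx S v; have h4 := norm_mulmx T v'.
apply: (le_trans h1).
have -> : K0 * `|v| * `|v'| = k%:R * `|E| * ((N%:R * `|S| * `|v|) * (N%:R * `|T| * `|v'|)).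
  by rewrite /K0; ring.
apply: ler_wpM2l; first by rewrite mulr_ge0.
apply: (le_trans h2).
by apply: ler_pM.
Qed.

Lemma uniq_near (P : 'M[R]_N) (ws : 'cV[R]_N) : P *m Jm ws = 1%:M ->
  exists2 eps : R, 0 < eps & forall a b, `|a - ws| < eps -> `|b - ws| < eps ->
    Fq a = Fq b -> a = b.
Proof.
move=> PJ.
set K := N%:R * `|P| * K0.
have Kge : 0 <= K by rewrite /K !mulr_ge0 // K0_ge0.
have K1 : 0 < 4 * K + 1 by rewrite ltr_wpDl // mulr_ge0.
exists (4 * K + 1)^-1; first by rewrite invr_gt0.
move=> a b ha hb hF.
set e := a - b; set dl := b - ws.
have hz : Jm ws *m e = - (Qf dl e + Qf e dl + Qf e e).
  have h : Fq b = Fq b + dFq b e + Qf e e.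
    have := Fq_shift b e 1.
    by rewrite !scale1r expr1n scale1r /e [b + (a - b)]addrC subrK hF.
  have h0 : dFq b e + Qf e e = 0.
    by apply: (addrI (Fq b)); rewrite addr0 addrA -h.
  move: h0.
  have -> : b = ws + dl by rewrite /dl addrC subrK.
  rewrite /dFq QfDl QfDr => h1.
  apply/eqP; rewrite -addr_eq0; apply/eqP; rewrite -[RHS]h1 -dFqE /dFq.
  exact: acfix2.
have he : e = - (P *m (Qf dl e + Qf e dl + Qf e e)).
  have := congr1 (mulmx P) hz.
  by rewrite mulmxA PJ mul1mx mulmxN.
have hdl : `|dl| < (4 * K + 1)^-1 by [].
have hee : `|e| < 2 * (4 * K + 1)^-1.
  have -> : e = (a - ws) - (b - ws) by rewrite /e opprB addrA subrK.
  apply: le_lt_trans (ler_normB _ _) _.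
  by rewrite mulr2n mulrDl mul1r ltrD.
have hbound : `|e| <= K * (2 * `|dl| + `|e|) * `|e|.
  rewrite {1}he normrN.
  apply: (le_trans (norm_mulmx _ _)).
  have hq1 := norm_Qf dl e; have hq2 := norm_Qf e dl; have hq3 := norm_Qf e e.
  have hs : `|Qf dl e + Qf e dl + Qf e e| <= K0 * `|dl| * `|e| + K0 * `|e| * `|dl| + K0 * `|e| * `|e|.
    apply: (le_trans (ler_normD _ _)); apply: lerD => //.
    by apply: (le_trans (ler_normD _ _)); apply: lerD.
  have -> : K * (2 * `|dl| + `|e|) * `|e| = N%:R * `|P| * (K0 * `|dl| * `|e| + K0 * `|e| * `|dl| + K0 * `|e| * `|e|).
    by rewrite /K; ring.
  by apply: ler_wpM2l => //; rewrite mulr_ge0.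
have hc : K * (2 * `|dl| + `|e|) < 1.
  apply: (@le_lt_trans _ _ (K * (4 * (4 * K + 1)^-1))).
    apply: ler_wpM2l => //.
    have -> : 4 * (4 * K + 1)^-1 = 2 * (4 * K + 1)^-1 + 2 * (4 * K + 1)^-1 :> R by ring.
    apply: lerD; last exact: ltW.
    by rewrite ler_pM2l // ltW.
  rewrite mulrA ltr_pdivrMr // mul1r; lra.
have e0 : `|e| <= 0.
  have ge := normr_ge0 e.
  set c := K * (2 * `|dl| + `|e|) in hbound hc.
  nra.
apply/eqP; rewrite -subr_eq0 -/e -normr_le0 //.
Qed.

Lemma Fq_cont ws : Fq x @[x --> ws] --> Fq ws.
Proof.
apply/(cvgrPdist_lt (FF := nbhs_filter ws)) => eps eps0.
set C := N%:R * `|Jm ws| + K0 + 1.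
have C0 : 0 < C by rewrite /C ltr_wpDl // addr_ge0 // ?K0_ge0 // mulr_ge0.
have r0 : 0 < Num.min 1 (eps / C) by rewrite lt_min ltr01 divr_gt0.
have := (cvgrPdist_lt (FF := nbhs_filter ws) id ws).1 cvg_id _ r0.
apply: filterS => x hx.
set z := x - ws.
have hxz : x = ws + 1 *: z by rewrite scale1r /z addrC subrK.
rewrite [in Fq x]hxz Fq_shift !scale1r expr1n scale1r.
have -> : Fq ws - (Fq ws + dFq ws z + Qf z z) = - (dFq ws z + Qf z z).
  move: (Fq ws) (dFq ws z) (Qf z z) => a0 b0 c1; by rewrite -addrA opprD addNKr.
rewrite normrN.
have hz : `|z| < Num.min 1 (eps / C) by rewrite /z distrC.
move: hz; rewrite lt_min => /andP[z1 zC].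
apply: (le_lt_trans (ler_normD _ _)).
have h1 : `|dFq ws z| <= N%:R * `|Jm ws| * `|z| by rewrite dFqE norm_mulmx.
have h2 := norm_Qf z z.
have h3 : K0 * `|z| * `|z| <= K0 * `|z|.
  rewrite -[leRHS]mulr1; apply: ler_wpM2l; first by rewrite mulr_ge0 // K0_ge0.
  exact: ltW.
have h4 : C * `|z| < eps by rewrite mulrC -ltr_pdivlMr.
have nz := normr_ge0 z.
have k0 := K0_ge0.
have j0 : 0 <= N%:R * `|Jm ws| by rewrite mulr_ge0.
rewrite /C in h4.
nra.
Qed.

End Quad.

Lemma pascal (R : pzRingType) (V : lmodType R) (X : nat -> nat -> V) m :
  \sum_(i < m.+1) 'C(m, i)%:R *: (X (m - i).+1 i + X (m - i)%N i.+1) =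
  \sum_(i < m.+2) 'C(m.+1, i)%:R *: X (m.+1 - i)%N i.
Proof.
under eq_bigr do rewrite scalerDr.
rewrite big_split /= [in RHS]big_ord_recl /=.
under [in RHS]eq_bigr do rewrite binS natrD scalerDl subSS.
rewrite [in RHS]big_split /= addrA; congr (_ + _).
rewrite big_ord_recl /= [in RHS]big_ord_recr /= (@bin_small m m.+1) //.
rewrite !bin0 !subn0 scale0r addr0; congr (_ + _).
apply: eq_bigr => i _.
by rewrite /bump /= subnSK.
Qed.


Lemma acfix3 (V : zmodType) (a b c d : V) :
  a + (b + (c + d)) = 0 -> a + b + d = - c.
Proof.
move=> h; apply/eqP; rewrite -addr_eq0; apply/eqP; rewrite -h.
rewrite !addrA; rewrite -[a + b + d + c]addrA [d + c]addrC addrA.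
by [].
Qed.
Lemma acfix4 (V : zmodType) (a b c : V) :
  a + (b + c) = a + c + b.
Proof. by rewrite addrA addrAC. Qed.

Section Curve.
Context {R : realType} {N k : nat} (c0 : 'cV[R]_N) (L : 'M[R]_N)
  (E : 'M[R]_(N,k)) (S T : 'M[R]_(k,N))
  (W : 'cV[R]_N -> 'cV[R]_N) (delta : R)
  (Wsm : smooth_on (ball (0 : 'cV[R]_N) delta) W)
  (Weq : forall y, ball (0 : 'cV[R]_N) delta y -> Fq c0 L E S T (W y) = y)
  (u s : 'cV[R]_N).

Definition gam (r : R) := W (r *: u + s).
Definition gk m := derive1n m gam.
Definition UU (r : R) := ball (0 : 'cV[R]_N) delta (r *: u + s).

Lemma gk_iter m : gk m = fun r => Defs.iterD (nseq m u) W (r *: u + s).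
Proof.
elim: m => [//|m IH].
rewrite /gk derive1nS -/(gk m) IH; apply/funext => r /=.
rewrite /derive1 /derive.
under eq_fun => h do rewrite scalerDl -addrA.
by [].
Qed.

Lemma UU_open r : UU r -> \forall r' \near r, UU r'.
Proof.
move=> hU.
have hc : (fun t : R => t *: u + s) @ r --> r *: u + s.
  apply: cvgD; last exact: cvg_cst.
  by apply: cvgZr_tmp; exact: cvg_id.
have hb : nbhs (r *: u + s) (ball (0 : 'cV[R]_N) delta).
  by apply: open_nbhs_nbhs; split => //; exact: ball_open.
exact: hc _ hb.
Qed.

Lemma gk_der m {r} : UU r -> is_derive r 1 (gk m) (gk m.+1 r).
Proof.
move=> hU.
have hd : derivable (gk m) r 1.
  have [hder _] := Wsm (nseq m u).
  rewrite gk_iter; move: (hder (r *: u + s) u hU).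
  rewrite /derivable; set g1 := fun h => h^-1 *: _; set g2 := fun h => h^-1 *: _.
  suff -> : g1 = g2 by [].
  rewrite funeqE /g1 /g2 => h /=.
  by rewrite [_%:A]mulr1 scalerDl addrA.
apply: (DeriveDef hd).
by rewrite /gk derive1nS derive1E.
Qed.

Definition Phi m r := L *m gk m r +
  \sum_(i < m.+1) 'C(m, i)%:R *: Qf E S T (gk (m - i) r) (gk i r).

Lemma Phi_der m {r} : UU r -> is_derive r 1 (Phi m) (Phi m.+1 r).
Proof.
move=> hU.
have -> : Phi m = (fun t => L *m gk m t) +
    \sum_(i < m.+1) (fun t => 'C(m, i)%:R *: Qf E S T (gk (m - i) t) (gk i t)).
  by apply/funext => t; rewrite fct_sumE.
apply: is_derive_eq.
  apply: is_deriveD; first exact: (is_derive_mulmx L (gk_der m hU)).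
  apply: is_derive_sum => i.
  exact: (is_deriveZ _ (is_derive_Qf E S T (gk_der (m - i) hU) (gk_der i hU))).
rewrite /Phi; congr (_ + _).
exact: (@pascal _ _ (fun a b => Qf E S T (gk a r) (gk b r)) m).
Qed.

Lemma is_derive_line (r : R) : is_derive r 1 (fun t : R => t *: u + s) u.
Proof.
have ql : (fun h : R => h^-1 *: (((fun t : R => t *: u + s) \o shift r) (h *: 1) - (r *: u + s))) @ 0^' --> u.
  have gl : (fun h : R => u) @ 0^' --> u by exact: cvg_cst.
  apply: cvg_trans gl; apply: near_eq_cvg; near=> h.
  have hn0 : h != 0 by near: h; exact: nbhs_dnbhs_neq.
  rewrite /= -[h *: 1]/(h * 1) mulr1 scalerDl.
  have -> : forall a b c : 'cV[R]_N, c + a + b - (a + b) = c.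
    by move=> a b c; rewrite -[c + a + b]addrA addrK.
  by rewrite scalerA mulVf // scale1r.
apply: DeriveDef; first by apply/cvg_ex; exists u.
exact: cvg_lim ql.
Unshelve. all: by end_near. Qed.

Lemma Phi_const m r : (0 < m)%N -> UU r -> Phi m r = (m == 1%N)%:R *: u.
Proof.
elim: m r => [|m IH] r; first by rewrite ltnn.
move=> _ hU.
case: m IH => [|m] IH.
  set G := cst c0 + (fun t => L *m gam t) + (fun t => Qf E S T (gam t) (gam t)).
  have hF : is_derive r 1 G (Phi 1 r).
    have h1 := is_deriveD (is_deriveD (is_derive_cst c0 r 1) (is_derive_mulmx L (gk_der 0 hU)))
       (is_derive_Qf E S T (gk_der 0 hU) (gk_der 0 hU)).
    apply: (is_derive_eq h1).
    rewrite /Phi !big_ord_recl big_ord0 /= add0r addr0.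
    by rewrite /bump /= bin0 binn mulr1n !scale1r.
  have hn : \forall t \near r, G t = t *: u + s.
    by move: (UU_open _ hU); apply: filterS => t ht; exact: Weq.
  have := near_eq_derive (1:R) hn.
  rewrite (@derive_val _ _ _ _ _ _ _ hF) (@derive_val _ _ _ _ _ _ _ (is_derive_line r)).
  by move=> ->; rewrite scale1r.
have hn : \forall t \near r, Phi m.+1 t = cst ((m.+1 == 1%N)%:R *: u) t.
  by move: (UU_open _ hU); apply: filterS => t ht; exact: IH.
have := near_eq_derive (1:R) hn.
rewrite (@derive_val _ _ _ _ _ _ _ (Phi_der m.+1 hU)) derive_cst => ->.
by rewrite /= mulr0n scale0r.
Qed.

Lemma curve_first r : UU r -> dFq L E S T (gam r) (gk 1 r) = u.
Proof.
move=> hU; have := Phi_const 1 r isT hU.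
rewrite /Phi !big_ord_recl big_ord0 /= addr0 /bump /= bin0 binn mulr1n !scale1r.
by rewrite /dFq acfix4.
Qed.

Lemma curve_identity q r : (0 < q)%N -> UU r ->
  dFq L E S T (gam r) (gk q.+1 r) =
  - \sum_(1 <= i < q.+1) 'C(q.+1, i)%:R *: Qf E S T (gk (q.+1 - i) r) (gk i r).
Proof.
move=> q0 hU; have := Phi_const q.+1 r isT hU.
rewrite eqSS; have -> : (q == 0%N) = false by case: q q0.
rewrite mulr0n scale0r /Phi big_ord_recl big_ord_recr /=.
rewrite big_add1 /= big_mkord /bump /=.
under eq_bigr do rewrite add0n.
rewrite add0n bin0 binn !mulr1n !scale1r subnn.
move/acfix3 => <-.
by rewrite /dFq addrAC.
Qed.

End Curve.

Section Data.
Context {R : realType} {n mI mE : nat} (H : 'M[R]_n) (d : 'cV[R]_n)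
  (AI : 'M[R]_(mI, n)) (bI : 'cV[R]_mI) (AE : 'M[R]_(mE, n)) (bE : 'cV[R]_mE).
Local Notation N := (n + (mI + mE))%N.
Definition Um : 'M[R]_(n, N) := usubmx (1%:M : 'M[R]_N).
Definition Dm : 'M[R]_(mI + mE, N) := dsubmx (1%:M : 'M[R]_N).
Definition Sm : 'M[R]_(mI, N) := usubmx Dm.
Definition Tm : 'M[R]_(mI, N) := AI *m Um.
Definition Em : 'M[R]_(N, mI) := col_mx 0 (col_mx 1%:M 0).
Definition Lm : 'M[R]_N := col_mx (H *m Um - (qp_A AI AE)^T *m Dm)
  (col_mx (- (diag_mx bI^T *m Sm)) (AE *m Um)).
Definition cm : 'cV[R]_N := col_mx d (col_mx 0 (- bE)).

Lemma wxE w : wx w = Um *m w.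
Proof. by rewrite /wx /Um mul_usub_mx mul1mx. Qed.
Lemma wlE w : wl w = Dm *m w.
Proof. by rewrite /wl /Dm mul_dsub_mx mul1mx. Qed.
Lemma wlIE w : wlI w = Sm *m w.
Proof. by rewrite /wlI /Sm mul_usub_mx -wlE. Qed.

Lemma QfE v v' : col_mx 0 (col_mx (cwmul (wlI v) (AI *m wx v')) 0) = Qf Em Sm Tm v v'.
Proof.
by rewrite /Qf /Em !mul_col_mx !mul0mx mul1mx wlIE wxE /Tm mulmxA.
Qed.

Lemma Fmu0E : Fmu H d AI bI AE bE 0 = Fq cm Lm Em Sm Tm.
Proof.
apply/funext => w.
rewrite /Fmu /Fq /Qf /Em /Lm /cm !mul_col_mx !mul0mx mul1mx !add_col_mx.
rewrite /qp_g /qp_cI /qp_cE wxE wlE wlIE !mulmxBl -!mulmxA.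
congr col_mx.
  by rewrite addr0 addrA [d + _]addrC.
congr col_mx.
  rewrite scale0r subr0 add0r cwmulDl cwmulNl [cwmul (AI *m _) _]cwmulC addrC.
  by rewrite cwmul_diag mulNmx mulmxA.
by rewrite addr0 addrC.
Qed.

Lemma Fmu_shift mu w : Fmu H d AI bI AE bE mu w + Defs.shift n mI mE mu = Fmu H d AI bI AE bE 0 w.
Proof.
rewrite /Fmu /Defs.shift !add_col_mx !addr0 scale0r subr0.
by rewrite subrK.
Qed.

End Data.

Section En.
Context {R : realType} {N : nat}.
Lemma enorm_eq0 (r : 'cV[R]_N) : enorm r = 0 -> r = 0.
Proof.
move/eqP; rewrite /enorm sqrtr_eq0 => h.
have hs : \sum_i r i 0 ^+ 2 = 0.
  by apply/le_anti; rewrite h /= sumr_ge0 // => i _; exact: sqr_ge0.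
have := psumr_eq0P (fun i _ => sqr_ge0 (r i 0)) hs.
move=> h0; apply/matrixP => i j; rewrite (ord1 j) mxE.
by apply/eqP; rewrite -sqrf_eq0; apply/eqP; exact: h0.
Qed.

Lemma enorm_nml (r : 'cV[R]_N) : enorm r *: nml r = r.
Proof.
rewrite /nml; case: eqP => [->|hr]; first by rewrite scaler0.
rewrite scalerA mulfV ?scale1r //.
by apply/eqP => /enorm_eq0.
Qed.
End En.

Theorem proposition3 (R : realType) (n mI mE : nat)
  (H : 'M[R]_n) (d : 'cV[R]_n)
  (AI : 'M[R]_(mI, n)) (bI : 'cV[R]_mI)
  (AE : 'M[R]_(mE, n)) (bE : 'cV[R]_mE)
  (HsymH : H^T = H)
  (xstar : 'cV[R]_n) (lstar : 'cV[R]_(mI + mE))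
  (* KKT point *)
  (KKT_stat : qp_g H d xstar - (qp_A AI AE)^T *m lstar = 0)
  (KKT_feasI : forall i, 0 <= qp_cI AI bI xstar i 0)
  (KKT_feasE : qp_cE AE bE xstar = 0)
  (KKT_dual : forall i : 'I_mI, 0 <= lstar (lshift mE i) 0)
  (KKT_compl : forall i : 'I_mI, lstar (lshift mE i) 0 * qp_cI AI bI xstar i 0 = 0)
  (* LICQ: gradients of active inequality and all equality constraints
     are linearly independent *)
  (LICQ : forall (yI : 'cV[R]_mI) (yE : 'cV[R]_mE),
      (forall i, qp_cI AI bI xstar i 0 != 0 -> yI i 0 = 0) ->
      AI^T *m yI + AE^T *m yE = 0 -> yI = 0 /\ yE = 0)
  (* strict complementarity *)
  (SC : forall i : 'I_mI, qp_cI AI bI xstar i 0 = 0 -> 0 < lstar (lshift mE i) 0)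
  (* strong second-order sufficiency *)
  (omega : R) (omega_gt0 : 0 < omega)
  (SOSC : forall p : 'cV[R]_n,
      (forall i : 'I_mI, qp_cI AI bI xstar i 0 = 0 -> (AI *m p) i 0 = 0) ->
      AE *m p = 0 ->
      omega * enorm p ^+ 2 <= (p^T *m H *m p) 0 0)
  (* the implicit function w^{w*,0} *)
  (W : 'cV[R]_(n + (mI + mE)) -> 'cV[R]_(n + (mI + mE)))
  (delta : R) (delta_gt0 : 0 < delta)
  (W_smooth : smooth_on (ball (0 : 'cV[R]_(n + (mI + mE))) delta) W)
  (W_eq : forall r, ball (0 : 'cV[R]_(n + (mI + mE))) delta r ->
      Fmu H d AI bI AE bE 0 (W r) = r)
  (W_0 : W 0 = col_mx xstar lstar)
  (* the sequences *)
  (mu : nat -> R) (mu_gt0 : forall k, 0 < mu k)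
  (mu_decr : forall k, mu k.+1 < mu k)
  (eps : R -> R) (eps_gt0 : forall m, 0 < m -> 0 < eps m)
  (eps_Theta : exists c1 c2 m0 : R, [/\ 0 < c1, 0 < c2, 0 < m0 &
      forall m, 0 < m -> m <= m0 -> c1 * m <= eps m /\ eps m <= c2 * m])
  (w : nat -> 'cV[R]_(n + (mI + mE)))
  (w_approx : forall k, enorm (Fmu H d AI bI AE bE (mu k) (w k.+1)) <= eps (mu k))
  (* subsequence K = range sigma along which w_{k+1} -> w* *)
  (sigma : nat -> nat) (sigma_incr : forall j, (sigma j < sigma j.+1)%N)
  (w_cvg : (fun j => w (sigma j).+1) @ \oo --> col_mx xstar lstar) :
  \forall j \near \oo, forall q : nat, (0 < q)%N ->
    let k := sigma j in
    let r := Fmu H d AI bI AE bE (mu k.+1) (w k.+1) in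
    let hw := what W (mu k.+1) r in
    jacF (Fmu H d AI bI AE bE 0) (w k.+1) *m hw q.+1 =
    - \sum_(1 <= i < q.+1)
        'C(q.+1, i)%:R *:
          col_mx 0 (col_mx (cwmul (wlI (hw (q.+1 - i)%N)) (AI *m wx (hw i))) 0).
Proof.
pose c0 := @cm R n mI mE d bE.
pose L := @Lm R n mI mE H AI bI AE.
pose E := @Em R n mI mE.
pose S := @Sm R n mI mE.
pose T := @Tm R n mI mE AI.
pose ws := col_mx xstar lstar.
have FE : Fmu H d AI bI AE bE 0 = Fq c0 L E S T := Fmu0E H d AI bI AE bE.
have Weq : forall y, ball (0 : 'cV[R]_(n + (mI + mE))) delta y -> Fq c0 L E S T (W y) = y.
  by move=> y hy; rewrite -FE; exact: W_eq.
have W0in : ball (0 : 'cV[R]_(n + (mI + mE))) delta 0 by exact: ballxx.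
have Fws : Fq c0 L E S T ws = 0 by rewrite /ws -W_0; exact: Weq.
pose P := \matrix_(i, j) (derive W 0 (delta_mx j 0 : 'cV[R]_(n + (mI + mE)))) i 0.
have JP : Jm L E S T ws *m P = 1%:M.
  apply/matrixP => i j.
  have hU : UU delta (delta_mx j 0) 0 0.
    by rewrite /UU scale0r addr0.
  have hc := curve_first c0 L E S T W delta W_smooth Weq (delta_mx j 0) 0 0 hU.
  rewrite gk_iter /gam /= scale0r addr0 W_0 -/ws in hc.
  have colP : P *m delta_mx j 0 = derive W 0 (delta_mx j 0 : 'cV[R]_(n + (mI + mE))).
    by rewrite -colE; apply/matrixP => a b; rewrite !mxE (ord1 b).
  have := congr1 (fun M : 'cV[R]_(n + (mI + mE)) => M i 0) hc.
  rewrite dFqE -colP mulmxA -colE !mxE => ->.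
  by rewrite eqxx andbT.
have PJ := mulmx1C JP.
have [eps1 eps1_gt0 huniq] := uniq_near c0 L E S T P ws PJ.
have hWc : W x @[x --> (0 : 'cV[R]_(n + (mI + mE)))] --> ws.
  have [_ hc] := W_smooth [::].
  rewrite continuous_open_subspace in hc; last exact: ball_open.
  rewrite /ws -W_0; exact: (hc 0 (mem_set W0in)).
have hFc := Fq_cont c0 L E S T ws; rewrite Fws in hFc.
have hFa := cvg_comp _ _ w_cvg hFc.
have hWa := cvg_comp _ _ hFa hWc.
have h1 := (cvgrPdist_lt _ _).1 w_cvg _ eps1_gt0.
have h2 := (cvgrPdist_lt _ _).1 hWa _ eps1_gt0.
have h3 := (cvgrPdist_lt _ _).1 hFa _ delta_gt0.
near=> j => q hq.
have hj1 : `|ws - w (sigma j).+1| < eps1 by near: j; exact: h1.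
have hj2 : `|ws - (W \o Fq c0 L E S T \o (fun j => w (sigma j).+1)) j| < eps1.
  by near: j; exact: h2.
have hj3 : `|0 - (Fq c0 L E S T \o (fun j => w (sigma j).+1)) j| < delta.
  by near: j; exact: h3.
cbv zeta.
move: hj2 hj3 => /= hj2 hj3.
set a := w (sigma j).+1 in hj1 hj2 hj3 *.
set mu1 := mu (sigma j).+1.
set rr := Fmu H d AI bI AE bE mu1 a.
set y := Fq c0 L E S T a in hj2 hj3.
have ya : rr + Defs.shift n mI mE mu1 = y by rewrite /rr Fmu_shift FE.
have hball : ball (0 : 'cV[R]_(n + (mI + mE))) delta y.
  by rewrite -ball_normE /=.
have hb := Weq y hball.
have aW : a = W y.
  apply: huniq; [by rewrite distrC | by rewrite distrC | by rewrite hb].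
set u := nml rr; set sh := Defs.shift n mI mE mu1; set rho := enorm rr.
have hUU : UU delta u sh rho by rewrite /UU /u /rho enorm_nml ya.
have agam : a = gam W u sh rho by rewrite /gam /u /rho enorm_nml ya.
have whatE : forall i, what W mu1 rr i = (- rho) ^+ i *: gk W u sh i rho by [].
rewrite FE jacF_Fq -dFqE whatE.
under eq_bigr do rewrite QfE !whatE.
rewrite dFqE -scalemxAr -dFqE agam.
rewrite (curve_identity c0 L E S T W delta W_smooth Weq u sh q rho hq hUU) scalerN.
congr (- _); rewrite scaler_sumr.
apply: eq_big_nat => i /andP[_ hi].
rewrite QfZl QfZr !scalerA; congr (_ *: _).
by rewrite -mulrA -exprD subnK ?(ltnW hi) // mulrC.
Unshelve. all: by end_near.
Qed.
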